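(* Let $f(x,y)=\dfrac{(x+1)(y+1)}{x+y+1}$. The multiplicative subgroup of $\mathbb{Q}^{+}$ generated by the set $\{f(x,y) : x,y \text{ positive integers}\}$ is all of $\mathbb{Q}^{+}$.
   Context: $\mathbb{Q}^+$ denotes the multiplicative group of positive rational numbers. *)

(* Defs.v *)
From mathcomp Require Import all_boot all_order all_algebra.
Set Implicit Arguments. Unset Strict Implicit. Unset Printing Implicit Defensive.
Import Order.TTheory GRing.Theory Num.Theory.
Local Open Scope ring_scope.

Definition f (x y : nat) : rat :=
  (((x + 1) * (y + 1))%N)%:R / ((x + y + 1)%N)%:R.

Definition fvals (q : rat) : Prop :=
  exists x y : nat, (0 < x)%N /\ (0 < y)%N /\ q = f x y.

Inductive gen_subgroup (S : rat -> Prop) : rat -> Prop :=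
| gen_one : gen_subgroup S 1
| gen_base q : S q -> gen_subgroup S q
| gen_mul q r : gen_subgroup S q -> gen_subgroup S r -> gen_subgroup S (q * r)
| gen_inv q : gen_subgroup S q -> gen_subgroup S q^-1.

(* Main.v *)
Require Import Defs.
From mathcomp Require Import all_boot all_order all_algebra.
From mathcomp Require Import ring lra zify.
Import Order.TTheory GRing.Theory Num.Theory.
Local Open Scope ring_scope.

Lemma f_gt0 x y : 0 < f x y.
Proof. by rewrite /f; apply: divr_gt0; rewrite ltr0n; lia. Qed.

Lemma two_in : gen_subgroup fvals 2%:R.
Proof.
have -> : (2%:R : rat) = f 1 1 * f 1 2 by rewrite /f; field.
by apply: gen_mul; apply: gen_base; [exists 1%N, 1%N | exists 1%N, 2%N].
Qed.

Lemma nat_in n : (0 < n)%N -> gen_subgroup fvals n%:R.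
Proof.
elim/ltn_ind: n => [[|[|[|m]]]] // IH _.
- exact: gen_one.
- exact: two_in.
have -> : ((m.+3)%:R : rat) = 2%:R * (m.+2)%:R * (f 1 m.+1)^-1.
  rewrite /f.
  have -> : ((1 + 1) * (m.+1 + 1))%N = (2 * m.+2)%N by lia.
  have -> : (1 + m.+1 + 1)%N = m.+3 by lia.
  rewrite natrM; field.
  by rewrite !gt_eqF // ltr_wpDr.
apply: (@gen_mul _ (2%:R * (m.+2)%:R) (f 1 m.+1)^-1).
  apply: (@gen_mul _ 2%:R (m.+2)%:R); [exact: two_in | exact: IH].
apply: gen_inv; apply: gen_base; exists 1%N, m.+1; do 2 split => //.
Qed.

Theorem mainTheorem5 : forall q : rat, gen_subgroup fvals q <-> 0 < q.
Proof.
move=> q; split.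
  elim=> [|r [x [y [_ [_ ->]]]]|r s _ Hr _ Hs|r _ Hr].
  - exact: ltr01.
  - exact: f_gt0.
  - exact: mulr_gt0.
  - by rewrite invr_gt0.
move=> q0.
have [n hn] : exists n : nat, numq q = n%:Z.
  by exists `|numq q|%N; rewrite abszE gtr0_norm // numq_gt0.
have [d hd] : exists d : nat, denq q = d%:Z.
  by exists `|denq q|%N; rewrite abszE gtr0_norm.
have n0 : (0 < n)%N by rewrite -ltz_nat -hn numq_gt0.
have d0 : (0 < d)%N by rewrite -ltz_nat -hd.
rewrite -[q]divq_num_den hn hd.
apply: (@gen_mul _ (n%:R) (d%:R)^-1); [exact: nat_in | apply: gen_inv; exact: nat_in].
Qed.
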